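(* Let $A,B\in\widehat{\mathbb F_q^\times}$ be such that each of $A$, $B$, $AB$, $A\overline B$ has order larger than $2$. Then for all $z\in\mathbb F_q$, $${}_2\mathbb F_1\!\left[\begin{matrix}A&A\phi\\&A^2\end{matrix};z\right]{}_2\mathbb F_1\!\left[\begin{matrix}B&B\phi\\&B^2\end{matrix};z\right]={}_2\mathbb F_1\!\left[\begin{matrix}AB&AB\phi\\&(AB)^2\end{matrix};z\right]+\overline B^2\!\left(\tfrac z4\right){}_2\mathbb F_1\!\left[\begin{matrix}A\overline B&A\overline B\phi\\&(A\overline B)^2\end{matrix};z\right]-\delta(1-z)AB(4),$$ $${}_2\mathbb F_1\!\left[\begin{matrix}A&A\phi\\&\phi\end{matrix};z\right]{}_2\mathbb F_1\!\left[\begin{matrix}B&B\phi\\&\phi\end{matrix};z\right]={}_2\mathbb F_1\!\left[\begin{matrix}AB&AB\phi\\&\phi\end{matrix};z\right]+\overline B^2(1-z)\,{}_2\mathbb F_1\!\left[\begin{matrix}A\overline B&A\overline B\phi\\&\phi\end{matrix};z\right]-\delta(z).$$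
   Context: $\mathbb F_q$ is a finite field with $q$ elements, $q$ a power of an odd prime $p$. $\widehat{\mathbb F_q^\times}$ is the group of multiplicative characters $\chi:\mathbb F_q^\times\to\mathbb C^\times$; every character, including the trivial character $\varepsilon$, is extended to $\mathbb F_q$ by $\chi(0)=0$. $\phi$ is the quadratic character, $\overline\chi$ denotes the complex-conjugate (inverse) character, and products/powers of characters are pointwise. For $x\in\mathbb F_q$, $\delta(x)=1$ if $x=0$ and $0$ otherwise. Jacobi sum: $J(A,B)=\sum_{x\in\mathbb F_q}A(x)B(1-x)$. Period function: ${}_2\mathbb P_1\!\left[\begin{matrix}A&B\\&C\end{matrix};\lambda\right]=\sum_{y\in\mathbb F_q}B(y)\,\overline BC(1-y)\,\overline A(1-\lambda y)$; normalized function ${}_2\mathbb F_1\!\left[\begin{matrix}A&B\\&C\end{matrix};\lambda\right]=\frac{1}{J(B,C\overline B)}\,{}_2\mathbb P_1\!\left[\begin{matrix}A&B\\&C\end{matrix};\lambda\right]$. *)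

(* Defs.v *)
From HB Require Import structures.
From mathcomp Require Import all_boot all_order all_algebra all_field.
Set Implicit Arguments. Unset Strict Implicit. Unset Printing Implicit Defensive.
Import Order.TTheory GRing.Theory Num.Theory.
Local Open Scope ring_scope.

Section FFChars.
Variable F : finFieldType.

(* A multiplicative character chi : F^x -> C^x, extended by chi(0) = 0. *)
Definition is_mchar (chi : F -> algC) : Prop :=
  [/\ chi 0 = 0,
      forall x : F, x != 0 -> chi x != 0
    & forall x y : F, x != 0 -> y != 0 -> chi (x * y) = chi x * chi y].

(* pointwise product, conjugate (= inverse) character, powers *)
Definition cmul (A B : F -> algC) : F -> algC := fun x => A x * B x.
Definition cbar (A : F -> algC) : F -> algC := fun x => (A x)^-1.
Definition cexp (A : F -> algC) (n : nat) : F -> algC := fun x => A x ^+ n.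

Definition char_order (chi : F -> algC) : nat :=
  (find (fun n => [forall x : F, (x != 0) ==> (chi x ^+ n.+1 == 1)])
        (iota 0 #|F|)).+1.

Definition qchar : F -> algC := fun x =>
  if x == 0 then 0 else if [exists y : F, y ^+ 2 == x] then 1 else -1.

Definition kdelta (x : F) : algC := if x == 0 then 1 else 0.

Definition Jacobi (A B : F -> algC) : algC := \sum_(x : F) A x * B (1 - x).

Definition P21 (A B C : F -> algC) (lam : F) : algC :=
  \sum_(y : F) B y * cmul (cbar B) C (1 - y) * cbar A (1 - lam * y).

Definition F21 (A B C : F -> algC) (lam : F) : algC :=
  P21 A B C lam / Jacobi B (cmul C (cbar B)).

End FFChars.

(* Main.v *)
Require Import Defs.
From HB Require Import structures.
From mathcomp Require Import all_boot all_order all_algebra all_field.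
From mathcomp Require Import all_fingroup all_solvable.
From mathcomp Require Import ring.
Import GRing.Theory.
Local Open Scope ring_scope.

Module Helpers.
Import Order.TTheory GRing.Theory Num.Theory FinRing.Theory.
Set Implicit Arguments. Unset Strict Implicit.
Lemma two_neq0 (F : finFieldType) : odd #|F| -> (2%:R : F) != 0.
Proof.
move=> oddF; apply/negP => /eqP h2.
pose o := GRing.one F.
have d1 : (#[o]%g %| #|[set: F]|)%N by apply: order_dvdG; rewrite inE.
have d2 : (#[o]%g %| 2)%N.
  rewrite order_dvdn zmodXgE. by apply/eqP; exact: h2.
have n1 : #[o]%g != 1%N. rewrite order_eq1. exact: (@oner_neq0 F).
have e2 : #[o]%g = 2%N.
  move: (dvdn_leq (isT : (0 < 2)%N) d2) (order_gt0 o) n1; case: (#[o]%g) => [|[|[|]]] //.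
by move: d1; rewrite e2 cardsT => /dvdn_odd/(_ oddF).
Qed.


Section Basic.
Variable F : finFieldType.

Definition mc (X : F -> algC) :=
  [/\ X 0 = 0, X 1 = 1 & forall x y, X (x*y) = X x * X y].

Lemma mcP X : is_mchar X -> mc X.
Proof.
case=> X0 Xn0 XM.
have X1 : X 1 = 1.
  have h := XM 1 1 (oner_neq0 _) (oner_neq0 _).
  rewrite mulr1 in h.
  have : X 1 * (X 1 - 1) = 0 by rewrite mulrBr mulr1 -h subrr.
  by move/eqP; rewrite mulf_eq0 subr_eq0 (negbTE (Xn0 _ (oner_neq0 _))) => /eqP.
split=> // x y.
have [->|xn0] := eqVneq x 0; first by rewrite mul0r X0 mul0r.
have [->|yn0] := eqVneq y 0; first by rewrite mulr0 X0 mulr0.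
exact: XM.
Qed.

Section MC.
Variable X : F -> algC.
Hypothesis hX : mc X.

Lemma mc0 : X 0 = 0. Proof. by case: hX. Qed.
Lemma mc1 : X 1 = 1. Proof. by case: hX. Qed.
Lemma mcM x y : X (x * y) = X x * X y. Proof. by case: hX. Qed.
Lemma mc_neq0 x : x != 0 -> X x != 0.
Proof.
move=> xn0; apply/eqP => h.
have := mcM x x^-1; rewrite mulfV // mc1 h mul0r => /eqP; by rewrite oner_eq0.
Qed.
Lemma mcV x : X x^-1 = (X x)^-1.
Proof.
have [->|xn0] := eqVneq x 0; first by rewrite invr0 mc0 invr0.
have := mcM x x^-1; rewrite mulfV // mc1 => h.
by apply: (mulfI (mc_neq0 xn0)); rewrite -h mulfV ?mc_neq0.
Qed.
Lemma mcD x y : X (x / y) = X x / X y. Proof. by rewrite mcM mcV. Qed.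
Lemma mcX x n : X (x ^+ n) = X x ^+ n.
Proof. elim: n => [|n IH]; by rewrite ?expr0 ?mc1 // !exprS mcM IH. Qed.
Lemma mcN1sq : X (-1) ^+ 2 = 1.
Proof. by rewrite -mcX sqrrN expr1n mc1. Qed.
Lemma mcN1V : (X (-1))^-1 = X (-1).
Proof. by rewrite -mcV invrN invr1. Qed.
Lemma mc_inv_mul x : x != 0 -> (X x)^-1 * X x = 1.
Proof. by move=> h; rewrite mulVf ?mc_neq0. Qed.

Lemma mc_sum0 a : a != 0 -> X a != 1 -> \sum_x X x = 0.
Proof.
move=> an0 Xa1.
have e : \sum_x X x = X a * \sum_x X x.
  rewrite mulr_sumr (reindex_inj (mulfI an0)) /=.
  by apply: eq_bigr => x _; rewrite mcM.
apply/eqP; move/eqP: e; rewrite -subr_eq0 -{1}[\sum_x X x]mul1r -mulrBl mulf_eq0.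
by rewrite subr_eq0 eq_sym (negbTE Xa1).
Qed.
End MC.

Lemma mc_mul X Y : mc X -> mc Y -> mc (cmul X Y).
Proof.
move=> hX hY; split; rewrite /cmul ?mc0 ?mc1 ?mul0r ?mulr1 //.
by move=> x y; rewrite !mcM // mulrACA.
Qed.
Lemma mc_bar X : mc X -> mc (cbar X).
Proof.
move=> hX; split; rewrite /cbar ?mc0 ?mc1 ?invr0 ?invr1 //.
by move=> x y; rewrite mcM // invfM.
Qed.
Lemma mc_exp X n : mc X -> mc (cexp X n.+1).
Proof.
move=> hX; split; rewrite /cexp ?mc0 ?mc1 ?expr1n ?exprS ?mul0r //.
by move=> x y; rewrite mcM // exprMn.
Qed.
End Basic.


Section Q.
Variable F : finFieldType.
Hypothesis two0 : (2%:R : F) != 0.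
Local Notation phi := (@qchar F).

Lemma sum_ind1 (a : F) : \sum_u (((u == a)%:R) : algC) = 1.
Proof. by rewrite (bigD1 a) //= eqxx big1 ?addr0 // => u /negbTE ->. Qed.

Lemma neq_opp (a : F) : a != 0 -> a != -a.
Proof.
move=> an0; apply/eqP => h.
have : a * 2%:R = 0 by rewrite mulr_natr mulr2n {1}h addNr.
by move/eqP; rewrite mulf_eq0 (negbTE an0) (negbTE two0).
Qed.

Lemma q0 : phi 0 = 0. Proof. by rewrite /qchar eqxx. Qed.

Lemma qsq (a : F) : a != 0 -> phi (a ^+ 2) = 1.
Proof.
move=> an0; rewrite /qchar expf_eq0 /= (negbTE an0).
by case: existsP => // -[]; exists a.
Qed.

Lemma qN0 (x : F) : x != 0 -> phi x ^+ 2 = 1.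
Proof. by move=> xn0; rewrite /qchar (negbTE xn0); case: existsP; rewrite ?sqrrN expr1n. Qed.

Lemma q_le1 (x : F) : phi x <= 1.
Proof.
rewrite /qchar; case: (x == 0) => //; case: existsP => _ //.
exact: (le_trans (lerN10 _) ler01).
Qed.

Lemma sqcount (d : F) : \sum_u (((u ^+ 2 == d)%:R) : algC) = 1 + phi d.
Proof.
have [->|dn0] := eqVneq d 0.
  rewrite q0 addr0 -[RHS](sum_ind1 0); apply: eq_bigr => u _.
  by rewrite expf_eq0.
rewrite /qchar (negbTE dn0); case: existsP => [[a /eqP ea]|ns].
  have an0 : a != 0 by apply: contraNneq dn0 => a0; rewrite -ea a0 expr0n.
  rewrite -ea (eq_bigr (fun u => ((u == a)%:R + (u == -a)%:R : algC))).
    by rewrite big_split /= !sum_ind1.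
  move=> u _; rewrite eqf_sqr.
  have [->|ua] := eqVneq u a; first by rewrite (negbTE (neq_opp an0)) addr0.
  by rewrite /= add0r.
rewrite subrr big1 // => u _.
by case: eqP => // e; case: ns; exists u; rewrite e.
Qed.

Lemma qsum : \sum_d phi d = 0.
Proof.
have h : \sum_(d : F) \sum_(u : F) (((u ^+ 2 == d)%:R) : algC) = #|F|%:R.
  rewrite exchange_big /= (eq_bigr (fun _ => 1)).
    by rewrite sumr_const cardT -cardE.
  by move=> u _; rewrite (eq_bigr (fun d => ((d == u^+2)%:R : algC))) ?sum_ind1 // => d _; rewrite eq_sym.
move: h; rewrite (eq_bigr (fun d => 1 + phi d)) => [|d _]; last exact: sqcount.
rewrite big_split /= sumr_const cardT -cardE => /eqP; rewrite -subr_eq0 addrC addrK.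
by move/eqP.
Qed.

Definition issq (x : F) := [exists y, y ^+ 2 == x].

Lemma qmul_sq (a b : F) : a != 0 -> phi (a ^+ 2 * b) = phi b.
Proof.
move=> an0; rewrite /qchar mulf_eq0 expf_eq0 /= (negbTE an0) /=.
case: (b == 0) => //.
case: existsP => [[y /eqP ey]|nb]; case: existsP => [[y' /eqP ey']|na] //.
  by case: na; exists (y / a); rewrite expr_div_n ey mulrAC divff ?mul1r // expf_neq0.
by case: nb; exists (a * y'); rewrite exprMn ey'.
Qed.

Lemma qns_mul (a : F) : a != 0 -> ~~ issq a -> forall d, phi (a * d) = - phi d.
Proof.
move=> an0 ns.
pose T d := - (phi (a * d) + phi d).
have T0 : forall d, 0 <= T d.
  move=> d; rewrite /T oppr_ge0.
  have [->|dn0] := eqVneq d 0; first by rewrite mulr0 q0 addr0.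
  case: (boolP (issq d)) => [/existsP[c /eqP ec]|nd].
    have cn0 : c != 0 by apply: contraNneq dn0 => c0; rewrite -ec c0 expr0n.
    have -> : phi (a * d) = -1.
      rewrite /qchar mulf_eq0 (negbTE an0) (negbTE dn0) /=.
      case: existsP => // -[y /eqP ey]; case/existsP: ns; exists (y / c).
      by rewrite expr_div_n ey ec mulfK // expf_neq0.
    by rewrite -ec qsq // addNr.
  have -> : phi d = -1 by rewrite /qchar (negbTE dn0); case: existsP => // h; case/negP: nd; exact/existsP.
  by rewrite subr_le0 q_le1.
have sT : \sum_d T d = 0.
  rewrite /T sumrN big_split /= qsum addr0.
  have -> : \sum_d phi (a*d) = \sum_d phi d by rewrite [RHS](reindex_inj (mulfI an0)).
  by rewrite qsum oppr0.
move=> d; have := @psumr_eq0P _ _ xpredT T (fun d _ => T0 d) sT d isT.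
by move/eqP; rewrite /T oppr_eq0 addr_eq0 => /eqP.
Qed.

Lemma qM (x y : F) : phi (x * y) = phi x * phi y.
Proof.
have [->|xn0] := eqVneq x 0; first by rewrite mul0r q0 mul0r.
have [->|yn0] := eqVneq y 0; first by rewrite mulr0 q0 mulr0.
case: (boolP (issq x)) => [/existsP[c /eqP ec]|nx].
  have cn0 : c != 0 by apply: contraNneq xn0 => c0; rewrite -ec c0 expr0n.
  by rewrite -ec qmul_sq // qsq // mul1r.
rewrite qns_mul //.
have -> : phi x = -1 by rewrite /qchar (negbTE xn0); case: existsP => // h; case/negP: nx; exact/existsP.
by rewrite mulN1r.
Qed.

Lemma mcq : mc phi.
Proof. split; [exact: q0 | by rewrite -(expr1n _ 2) qsq ?oner_neq0 | exact: qM]. Qed.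
End Q.

Section Q2.
Variable F : finFieldType.
Hypothesis two0 : (2%:R : F) != 0.
Local Notation phi := (@qchar F).
Lemma qinv (x : F) : (phi x)^-1 = phi x.
Proof. by rewrite /qchar; case: (x == 0); rewrite ?invr0 //; case: existsP; rewrite ?invr1 ?invrN ?invr1. Qed.
Lemma qV (x : F) : phi x^-1 = phi x.
Proof. by rewrite (mcV (mcq two0)) qinv. Qed.
Lemma q_pm (x : F) : x != 0 -> phi x = 1 \/ phi x = -1.
Proof. by move=> xn0; rewrite /qchar (negbTE xn0); case: existsP; [left|right]. Qed.
End Q2.


Section J.
Variable F : finFieldType.

Lemma affine_sum (psi : F -> algC) (c a : F) : c != 0 ->
  \sum_u psi (c * u + a) = \sum_u psi u.
Proof.
move=> cn0; rewrite [RHS](reindex_inj (h := fun u => c * u + a)) //.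
by move=> u v /= /addIr /(mulfI cn0).
Qed.

Lemma inv_shift_inj : injective (fun u : F => 1 - u^-1).
Proof. by move=> u v /= /addrI /oppr_inj /invr_inj. Qed.

Lemma sum_nz (G : F -> algC) : \sum_y (y != 0)%:R * G y = \sum_y G y - G 0.
Proof.
rewrite [in RHS](bigD1 0) //= addrAC subrr add0r (bigD1 0) //= eqxx mul0r add0r.
by apply: eq_bigr => y ->; rewrite mul1r.
Qed.

Lemma jacJ (chi psi : F -> algC) : mc chi -> mc psi ->
  \sum_x chi x = 0 -> \sum_x psi x = 0 -> \sum_x cmul chi psi x = 0 ->
  Jacobi chi psi * Jacobi (cbar chi) (cbar psi) = #|F|%:R.
Proof.
move=> hc hp sc sp scp.
rewrite /Jacobi /cbar mulr_suml.
pose S (a : F) := \sum_u psi ((1 - a) * u + a).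
have e1 : forall x, chi x * psi (1 - x) * \sum_y (chi y)^-1 * (psi (1 - y))^-1
   = \sum_y (chi x * psi (1 - x) * ((chi y)^-1 * (psi (1 - y))^-1)).
  by move=> x; rewrite mulr_sumr.
rewrite (eq_bigr _ (fun x _ => e1 x)) exchange_big /=.
have e2 : forall y, \sum_x chi x * psi (1 - x) * ((chi y)^-1 * (psi (1 - y))^-1)
   = \sum_a chi a * ((y != 0)%:R * psi ((1 - a * y) / (1 - y))).
  move=> y; have [->|yn0] := eqVneq y 0.
    rewrite mc0 // invr0 !mul0r big1 ?[RHS]big1 // => x _; by rewrite ?mulr0 ?mul0r ?mulr0.
  rewrite (reindex_inj (mulIf yn0)); apply: eq_bigr => a _.
  rewrite (mcM hc) (mcD hp) mul1r.
  have := mc_inv_mul hc yn0; move: (chi y) (chi y)^-1 => u v h.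
  by rewrite -[RHS]mul1r -h; ring.
rewrite (eq_bigr _ (fun y _ => e2 y)) exchange_big /=.
have e3 : forall a, \sum_y chi a * ((y != 0)%:R * psi ((1 - a * y) / (1 - y)))
   = chi a * (S a - psi a - 1).
  move=> a; rewrite -mulr_sumr sum_nz.
  have -> : psi ((1 - a * 0) / (1 - 0)) = 1 by rewrite mulr0 !subr0 invr1 mulr1 (mc1 hp).
  congr (_ * (_ - _)).
  have -> : S a = psi a + \sum_(u | u != 0) psi ((1 - a) * u + a).
    by rewrite /S (bigD1 0) //= mulr0 add0r.
  rewrite addrAC subrr add0r (reindex_inj inv_shift_inj) /= (bigD1 0) //=.
  rewrite invr0 subr0 subrr invr0 mulr0 (mc0 hp) add0r.
  apply: eq_bigr => u un0; congr psi; field.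
  by rewrite un0 opprB addrC subrK oner_neq0.
rewrite (eq_bigr _ (fun a _ => e3 a)).
have -> : \sum_a chi a * (S a - psi a - 1)
    = \sum_a chi a * S a - \sum_a cmul chi psi a - \sum_a chi a.
  by rewrite -!sumrB; apply: eq_bigr => a _; rewrite /cmul; ring.
rewrite scp sc !subr0 (bigD1 1) //= big1 ?addr0.
  rewrite (mc1 hc) mul1r /S (eq_bigr (fun _ => 1)) ?sumr_const ?cardT -?cardE //.
  by move=> u _; rewrite subrr mul0r add0r (mc1 hp).
move=> a a1; rewrite /S affine_sum ?sp ?mulr0 //.
by rewrite subr_eq0 eq_sym.
Qed.
End J.


Lemma order_gt2 (F : finFieldType) (X : F -> algC) :
  (2 < char_order X)%N -> exists2 a, a != 0 & X a ^+ 2 != 1.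
Proof.
move=> h; apply/exists_inP; apply: contraLR h; rewrite negb_exists_in => /forall_inP H.
rewrite /char_order.
have -> : #|F| = (#|F| - 2).+2.
  by have := finNzRing_gt1 F; case: #|F| => [|[|n]] // _; rewrite subn2.
rewrite /=; case: ifP => //; case: ifP => // /negP[].
apply/forall_inP => x xn0; exact: (negPn (H x xn0)).
Qed.

Lemma pm1 (e : algC) : e ^+ 2 = 1 -> e = 1 \/ e = -1.
Proof. by move/eqP; rewrite sqrf_eq1 => /orP[/eqP->|/eqP->]; [left|right]. Qed.

Section Sums.
Variable F : finFieldType.
Hypothesis two0 : (2%:R : F) != 0.
Local Notation phi := (@qchar F).
Let hq := mcq two0.

Lemma sum_delta (x : F) (H : F -> algC) : \sum_t ((x == t)%:R) * H t = H x.
Proof.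
rewrite (bigD1 x) //= eqxx mul1r big1 ?addr0 // => t tn.
by rewrite eq_sym (negbTE tn) mul0r.
Qed.

Lemma sum_nonsq (G : F -> algC) z : z != 0 -> ~~ issq z ->
  \sum_w phi w * G (w + z * w^-1) = 0.
Proof.
move=> zn0 nz.
set S := \sum_w _.
have e : S = - S.
  rewrite {1}/S (reindex_inj (h := fun w => z * w^-1)); last first.
    by move=> u v /= /(mulfI zn0) /invr_inj.
  rewrite /S -sumrN; apply: eq_bigr => w _.
  rewrite (qns_mul two0) // (qV two0) invfM invrK mulrA mulfV // mul1r addrC mulNr.
  done.
have : S *+ 2 == 0 by rewrite mulr2n {1}e addNr.
by rewrite mulrn_eq0 /= => /eqP.
Qed.

Lemma sqr_ne (w : F) : w != 0 -> w ^+ 2 != 0.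
Proof. by move=> h; rewrite expf_neq0. Qed.

Lemma sum_sq (G : F -> algC) s : s != 0 ->
  \sum_w phi w * G (w + s ^+ 2 * w^-1)
  = \sum_t (phi (t + 2%:R * s) + phi (t - 2%:R * s)) * G t.
Proof.
move=> sn0.
pose T w := w + s ^+ 2 * w^-1.
pose H t := phi (t + 2%:R * s) * G t.
have Ts : T (- s) = - (2%:R * s) by rewrite /T; field; rewrite ?oppr_eq0 ?sn0.
have E1 : forall w, w != - s -> phi w * G (T w) = (w != 0)%:R * H (T w).
  move=> w ws; have [->|wn0] := eqVneq w 0; first by rewrite q0 !mul0r.
  rewrite /= mul1r /H; congr (_ * _).
  have wsn0 : w + s != 0 by rewrite -(subr_eq0 w (-s)) opprK in ws *.
  have -> : T w + 2%:R * s = (w + s) ^+ 2 * w^-1 by rewrite /T; field.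
  by rewrite qmul_sq // (qV two0).
have E2 : \sum_w phi w * G (T w) = phi (- s) * G (- (2%:R * s)) + \sum_w (w != 0)%:R * H (T w).
  rewrite (bigD1 (- s)) //= Ts; congr (_ + _).
  rewrite [RHS](bigD1 (- s)) //= Ts /H.
  have -> : - (2%:R * s) + 2%:R * s = 0 by rewrite addNr.
  rewrite q0 !mul0r mulr0 add0r.
  by apply: eq_bigr => w ws; apply: E1.
have cnt : forall t, \sum_w (((w != 0) && (T w == t))%:R : algC) = 1 + phi (t ^+ 2 - 4%:R * s ^+ 2).
  move=> t.
  pose h : F := 2%:R^-1.
  pose D := t ^+ 2 - 4%:R * s ^+ 2.
  have key : forall w, ((w != 0) && (T w == t)) = ((w - t * h) ^+ 2 == D * h ^+ 2).
    move=> w.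
    have e : (w - t * h) ^+ 2 - D * h ^+ 2 = w ^+ 2 - t * w + s ^+ 2.
      by rewrite /h /D; field.
    rewrite -[((w - t * h) ^+ 2 == _)]subr_eq0 e.
    have [->|wn0] := eqVneq w 0.
      by rewrite /= expr0n /= mulr0 subrr add0r (negbTE (sqr_ne sn0)).
    have e2 : T w - t = (w ^+ 2 - t * w + s ^+ 2) * w^-1 by rewrite /T; field.
    by rewrite /= -subr_eq0 e2 mulf_eq0 invr_eq0 (negbTE wn0) orbF.
  rewrite (eq_bigr (fun w => (((w - t * h) ^+ 2 == D * h ^+ 2))%:R)); last by move=> w _; rewrite key.
  rewrite [LHS](reindex_inj (h := fun w => w + t * h)) /=; last by move=> u v /addIr.
  rewrite (eq_bigr (fun w => ((w ^+ 2 == D * h ^+ 2))%:R)); last by move=> w _; rewrite addrK.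
  rewrite sqcount // mulrC qmul_sq //.
  by rewrite /h invr_eq0.
have E3 : \sum_w (w != 0)%:R * H (T w) = \sum_t H t * (1 + phi (t ^+ 2 - 4%:R * s ^+ 2)).
  rewrite (eq_bigr (fun w => \sum_t (((w != 0) && (T w == t))%:R) * H t)); last first.
    move=> w _; case: (w != 0) => /=; first by rewrite mul1r sum_delta.
    by rewrite mul0r big1 // => t _; rewrite mul0r.
  rewrite exchange_big /=; apply: eq_bigr => t _; by rewrite -mulr_suml cnt mulrC.
have E4 : \sum_t H t * (1 + phi (t ^+ 2 - 4%:R * s ^+ 2))
     = \sum_t (phi (t + 2%:R * s) + phi (t - 2%:R * s)) * G t - phi (- s) * G (- (2%:R * s)).
  rewrite (bigD1 (- (2%:R * s))) //= [X in _ = X - _](bigD1 (- (2%:R*s))) //= /H.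
  have -> : - (2%:R * s) + 2%:R * s = 0 by rewrite addNr.
  have -> : - (2%:R * s) - 2%:R * s = 2%:R ^+ 2 * (- s) by ring.
  rewrite q0 qmul_sq // !mul0r !add0r addrAC subrr add0r.
  apply: eq_bigr => t tn.
  have tn0 : t + 2%:R * s != 0 by rewrite -(subr_eq0 t (- (2%:R * s))) opprK in tn.
  have -> : t ^+ 2 - 4%:R * s ^+ 2 = (t + 2%:R * s) * (t - 2%:R * s) by ring.
  rewrite qM //.
  by case: (q_pm tn0) => ->; ring.
by rewrite E2 E3 E4 addrC subrK.
Qed.
End Sums.


Section Eval.
Variable F : finFieldType.
Hypothesis two0 : (2%:R : F) != 0.
Local Notation phi := (@qchar F).
Variable X : F -> algC.
Hypothesis hX : mc X.
Variable a0 : F.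
Hypothesis a0n0 : a0 != 0.
Hypothesis Xa0 : X a0 ^+ 2 != 1.
Let hq := mcq two0.
Local Notation Xb := (cbar X).

Lemma P1_w z : P21 X (cmul X phi) phi z = \sum_w phi w * Xb (w + z * w^-1 - 1 - z).
Proof.
rewrite /P21 (reindex_inj invr_inj); apply: eq_bigr => w _.
rewrite /cmul /cbar.
have [->|wn0] := eqVneq w 0; first by rewrite invr0 (mc0 hX) q0 !mul0r.
have [->|wn1] := eqVneq w 1.
  rewrite invr1 subrr (mc0 hX) q0 !mulr0 mul0r.
  have -> : 1 + z * 1 - 1 - z = 0 by ring.
  by rewrite (mc0 hX) invr0 mulr0.
have d1 : w - 1 != 0 by rewrite subr_eq0.
have e1 : 1 - w^-1 = (w - 1) * w^-1 by field.
have e2 : 1 - z * w^-1 = (w - z) * w^-1 by field.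
have e3 : w + z * w^-1 - 1 - z = (w - 1) * (w - z) * w^-1 by field.
rewrite e1 e2 e3 !(mcM hX) !(mcV hX) !(mcM hq) !(mcV hq) !invfM !invrK.
have xn0 := mc_neq0 hX wn0; have yn0 := mc_neq0 hX d1.
move: (X (w - z))^-1 => T.
by case: (q_pm wn0) => ->; case: (q_pm d1) => ->; field; rewrite ?xn0 ?yn0 ?oppr_eq0 ?oner_eq0.
Qed.

Lemma Xa1 : X a0 != 1.
Proof. by apply: contraNneq Xa0 => ->; rewrite expr1n. Qed.

Lemma sumXb : \sum_x Xb x = 0.
Proof.
apply: (mc_sum0 (mc_bar hX) a0n0); rewrite /cbar.
by apply: contraNneq Xa1 => h; rewrite -[X a0]invrK h invr1.
Qed.

Lemma sumXphi : \sum_x cmul X phi x = 0.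
Proof.
apply: (mc_sum0 (mc_mul hX hq) a0n0); rewrite /cmul.
apply: contraNneq Xa0 => h; case: (q_pm a0n0) h => -> h.
  by rewrite mulr1 in h; rewrite h expr1n.
by rewrite mulrN1 in h; rewrite -[X a0]opprK h sqrrN expr1n.
Qed.

Lemma sumphiXb : \sum_x cmul phi Xb x = 0.
Proof.
apply: (mc_sum0 (mc_mul hq (mc_bar hX)) a0n0); rewrite /cmul /cbar.
apply: contraNneq Xa0 => h; case: (q_pm a0n0) h => -> h.
  by rewrite mul1r in h; rewrite -[X a0]invrK h invr1 expr1n.
by rewrite mulN1r in h; rewrite -[X a0]invrK -[(X a0)^-1]opprK h invrN invr1 sqrrN expr1n.
Qed.

Definition J1 := \sum_w phi w * Xb (w - 1).

Lemma P1_0 : P21 X (cmul X phi) phi 0 = J1.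
Proof.
rewrite P1_w; apply: eq_bigr => w _; congr (_ * Xb _); ring.
Qed.

Lemma J1_eq : Jacobi (cmul X phi) (cmul phi (cbar (cmul X phi))) = J1.
Proof.
rewrite -P1_0 /P21 /Jacobi; apply: eq_bigr => y _.
by rewrite mul0r subr0 /cbar (mc1 hX) invr1 mulr1 /cmul [phi (1 - y) * _]mulrC.
Qed.

Lemma psi_eq x : cmul phi (cbar (cmul X phi)) x = Xb x.
Proof.
rewrite /cmul /cbar; have [->|xn0] := eqVneq x 0; first by rewrite q0 (mc0 hX) !mul0r invr0.
rewrite invfM mulrC -mulrA mulVf ?mulr1 //.
by case: (q_pm xn0) => ->; rewrite ?oppr_eq0 oner_eq0.
Qed.

Lemma J1_nz : J1 != 0.
Proof.
rewrite -J1_eq.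
have -> : Jacobi (cmul X phi) (cmul phi (cbar (cmul X phi))) = Jacobi (cmul X phi) Xb.
  by apply: eq_bigr => y _; rewrite psi_eq.
have := jacJ (mc_mul hX hq) (mc_bar hX) sumXphi sumXb.
have scp : \sum_x cmul (cmul X phi) Xb x = 0.
  rewrite -[RHS](qsum two0); apply: eq_bigr => x _; rewrite /cmul /cbar.
  have [->|xn0] := eqVneq x 0; first by rewrite q0 mulr0 mul0r.
  by rewrite mulrAC mulfV ?mul1r // mc_neq0.
move=> /(_ scp) h; apply/eqP => h0; move: h; rewrite h0 mul0r => /eqP.
by rewrite eq_sym pnatr_eq0 => /eqP e; move: (finNzRing_gt1 F); rewrite e.
Qed.

Lemma LC d : \sum_x phi x * Xb (x - d ^+ 2) = Xb (d ^+ 2) * J1.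
Proof.
have [->|dn0] := eqVneq d 0.
  rewrite expr0n /= /cbar (mc0 hX) invr0 mul0r -[RHS]sumphiXb.
  by apply: eq_bigr => x _; rewrite subr0.
rewrite (reindex_inj (mulfI (sqr_ne dn0))) /J1 mulr_sumr; apply: eq_bigr => y _.
rewrite qmul_sq // mulrCA; congr (_ * _).
have -> : d ^+ 2 * y - d ^+ 2 = d ^+ 2 * (y - 1) by ring.
by rewrite (mcM (mc_bar hX)).
Qed.

Lemma P1_sq s : s != 0 ->
  P21 X (cmul X phi) phi (s ^+ 2) = (Xb ((1 + s) ^+ 2) + Xb ((1 - s) ^+ 2)) * J1.
Proof.
move=> sn0; rewrite P1_w.
have := sum_sq two0 (fun t => Xb (t - 1 - s ^+ 2)) sn0; rewrite /= => ->.
rewrite (eq_bigr (fun t => phi (t + 2%:R * s) * Xb (t - 1 - s ^+ 2)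
                         + phi (t - 2%:R * s) * Xb (t - 1 - s ^+ 2))); last by move=> t _; rewrite mulrDl.
rewrite big_split /= [RHS]mulrDl -!LC; congr (_ + _).
  rewrite (reindex_inj (h := fun x => x - 2%:R * s)) /=; last by move=> u v /addIr.
  apply: eq_bigr => x _; rewrite subrK; congr (_ * Xb _); ring.
rewrite (reindex_inj (h := fun x => x + 2%:R * s)) /=; last by move=> u v /addIr.
apply: eq_bigr => x _; rewrite addrK; congr (_ * Xb _); ring.
Qed.

Lemma P1_ns z : z != 0 -> ~~ issq z -> P21 X (cmul X phi) phi z = 0.
Proof.
move=> zn0 nz; rewrite P1_w -[RHS](sum_nonsq two0 (fun t => Xb (t - 1 - z)) zn0 nz).
by [].
Qed.

Definition F1 z := F21 X (cmul X phi) phi z.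

Lemma F1E z : F1 z = P21 X (cmul X phi) phi z / J1.
Proof. by rewrite /F1 /F21 -J1_eq. Qed.

Lemma F1_0 : F1 0 = 1.
Proof. by rewrite F1E P1_0 divff // J1_nz. Qed.

Lemma F1_sq s : s != 0 -> F1 (s ^+ 2) = Xb ((1 + s) ^+ 2) + Xb ((1 - s) ^+ 2).
Proof. by move=> sn0; rewrite F1E P1_sq // mulfK // J1_nz. Qed.

Lemma F1_ns z : z != 0 -> ~~ issq z -> F1 z = 0.
Proof. by move=> zn0 nz; rewrite F1E P1_ns // mul0r. Qed.

Definition hh (y : F) := if y == 1 then 1 else y / (y - 1).

Lemma hhK : cancel hh hh.
Proof.
move=> y; rewrite /hh; have [->|y1] := eqVneq y 1; first by rewrite eqxx.
have d1 : y - 1 != 0 by rewrite subr_eq0.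
have h1 : y / (y - 1) != 1.
  apply/eqP => h; move: h => /(congr1 (fun t => t * (y - 1))); rewrite mulfVK // mul1r.
  move/eqP; rewrite -subr_eq0 opprB addrC subrK => /eqP h; move: (oner_neq0 F); rewrite -h eqxx.
  done.
rewrite (negbTE h1).
have d2 : y / (y - 1) - 1 = (y - 1)^-1 by field.
by rewrite d2 invrK mulfVK.
Qed.

Lemma trans z : P21 X (cmul X phi) phi (1 - z) = cmul X phi (-1) * P21 X (cmul X phi) (cexp X 2) z.
Proof.
rewrite /P21 (reindex_inj (can_inj hhK)) mulr_sumr; apply: eq_bigr => y _.
rewrite /cmul /cbar /cexp.
have [->|y1] := eqVneq y 1.
  by rewrite /hh eqxx !subrr (mc0 hX) q0 expr2 !(mulr0, mul0r, invr0).
rewrite /hh (negbTE y1).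
have dn0 : y - 1 != 0 by rewrite subr_eq0.
have e1 : 1 - y / (y - 1) = (-1) * (y - 1)^-1 by field.
have e2 : 1 - (1 - z) * (y / (y - 1)) = (z * y - 1) * (y - 1)^-1 by field.
have e3 : 1 - y = (-1) * (y - 1) by ring.
have e4 : 1 - z * y = (-1) * (z * y - 1) by ring.
rewrite e1 e2 e3 e4 !(mcM hX) !(mcV hX) !(mcM hq) !(mcV hq) !invfM !invrK.
have xd := mc_neq0 hX dn0.
move: (X (z * y - 1))^-1 => T.
have m1 : (-1 : F) != 0 by rewrite oppr_eq0 oner_neq0.
case: (pm1 (mcN1sq hX)) => ->; case: (q_pm m1) => ->; case: (q_pm dn0) => ->;
  by field; rewrite ?xd ?oppr_eq0 ?oner_eq0.
Qed.

Lemma four_neq0 : (4%:R : F) != 0.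
Proof. have -> : (4%:R : F) = 2%:R * 2%:R by ring. by rewrite mulf_neq0. Qed.

Lemma F2E z : F21 X (cmul X phi) (cexp X 2) z = X 4%:R * F1 (1 - z).
Proof.
have jac : Jacobi (cmul X phi) (cmul (cexp X 2) (cbar (cmul X phi)))
         = P21 X (cmul X phi) (cexp X 2) 0.
  rewrite /P21 /Jacobi; apply: eq_bigr => y _.
  by rewrite mul0r subr0 /cbar (mc1 hX) invr1 mulr1 /cmul [cexp X 2 (1 - y) * _]mulrC.
have m1 : (-1 : F) != 0 by rewrite oppr_eq0 oner_neq0.
set c := cmul X phi (-1).
have cn0 : c != 0 by rewrite /c /cmul mulf_neq0 // mc_neq0.
have P2E : forall w, P21 X (cmul X phi) (cexp X 2) w = c^-1 * P21 X (cmul X phi) phi (1 - w).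
  by move=> w; rewrite trans mulKf.
have P1E : forall w, P21 X (cmul X phi) phi w = F1 w * J1.
  by move=> w; rewrite F1E divfK // J1_nz.
rewrite /F21 jac !P2E.
have -> : P21 X (cmul X phi) phi (1 - 0) = P21 X (cmul X phi) phi (1 ^+ 2) by rewrite subr0 expr1n.
rewrite P1_sq ?oner_neq0 // P1E.
have -> : (1 - 1 : F) = 0 by rewrite subrr.
have -> : ((1 + 1) ^+ 2 : F) = 4%:R by ring.
rewrite expr0n /= /cbar (mc0 hX) invr0 addr0.
have J1n := J1_nz; have X4 := mc_neq0 hX four_neq0.
by field; rewrite ?J1n ?X4 ?cn0.
Qed.
End Eval.


Section Final.
Variable F : finFieldType.
Hypothesis two0 : (2%:R : F) != 0.
Variables A B : F -> algC.
Hypothesis hA : mc A.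
Hypothesis hB : mc B.
Variables a1 a2 a3 a4 : F.
Hypothesis a1n : a1 != 0.
Hypothesis a2n : a2 != 0.
Hypothesis a3n : a3 != 0.
Hypothesis a4n : a4 != 0.
Hypothesis Xa1 : A a1 ^+ 2 != 1.
Hypothesis Xa2 : B a2 ^+ 2 != 1.
Hypothesis Xa3 : cmul A B a3 ^+ 2 != 1.
Hypothesis Xa4 : cmul A (cbar B) a4 ^+ 2 != 1.
Let hAB := mc_mul hA hB.
Let hAbB := mc_mul hA (mc_bar hB).

Lemma second z : F1 A z * F1 B z
  = F1 (cmul A B) z + cexp (cbar B) 2 (1 - z) * F1 (cmul A (cbar B)) z - kdelta z.
Proof.
have [->|zn0] := eqVneq z 0.
  rewrite (F1_0 two0 hA a1n Xa1) (F1_0 two0 hB a2n Xa2) (F1_0 two0 hAB a3n Xa3)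
          (F1_0 two0 hAbB a4n Xa4) /kdelta eqxx /cexp /cbar subr0 (mc1 hB) invr1.
  by rewrite expr1n !mulr1 addrK.
have kd : kdelta z = 0 by rewrite /kdelta (negbTE zn0).
rewrite kd subr0.
case: (boolP (issq z)) => [/existsP[s /eqP es]|nz]; last first.
  rewrite (F1_ns two0 hA zn0 nz) (F1_ns two0 hB zn0 nz) (F1_ns two0 hAB zn0 nz)
          (F1_ns two0 hAbB zn0 nz).
  by rewrite !mulr0 addr0.
have sn0 : s != 0 by apply: contraNneq zn0 => s0; rewrite -es s0 expr0n.
rewrite -es (F1_sq two0 hA a1n Xa1 sn0) (F1_sq two0 hB a2n Xa2 sn0)
   (F1_sq two0 hAB a3n Xa3 sn0) (F1_sq two0 hAbB a4n Xa4 sn0).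
have -> : 1 - s ^+ 2 = (1 + s) * (1 - s) by ring.
rewrite /cexp /cbar /cmul !(mcX hA) !(mcX hB) (mcM hB).
have [e1|n1] := eqVneq (1 + s) 0; have [e2|n2] := eqVneq (1 - s) 0.
- by rewrite e1 e2 (mc0 hA) (mc0 hB) !expr2 !(mulr0, mul0r, invr0, add0r, addr0).
- rewrite e1 (mc0 hA) (mc0 hB) !expr2 !(mulr0, mul0r, invr0, add0r, addr0).
  have := mc_neq0 hA n2; have := mc_neq0 hB n2.
  by move=> h1 h2; field; rewrite ?h1 ?h2.
- rewrite e2 (mc0 hA) (mc0 hB) !expr2 !(mulr0, mul0r, invr0, add0r, addr0).
  have := mc_neq0 hA n1; have := mc_neq0 hB n1.
  by move=> h1 h2; field; rewrite ?h1 ?h2.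
have := mc_neq0 hA n2; have := mc_neq0 hB n2.
have := mc_neq0 hA n1; have := mc_neq0 hB n1.
by move=> h1 h2 h3 h4; field; rewrite ?h1 ?h2 ?h3 ?h4.
Qed.

Lemma first z :
    F21 A (cmul A (@qchar F)) (cexp A 2) z * F21 B (cmul B (@qchar F)) (cexp B 2) z =
      F21 (cmul A B) (cmul (cmul A B) (@qchar F)) (cexp (cmul A B) 2) z
      + cexp (cbar B) 2 (z / 4%:R)
        * F21 (cmul A (cbar B)) (cmul (cmul A (cbar B)) (@qchar F))
              (cexp (cmul A (cbar B)) 2) z
      - kdelta (1 - z) * cmul A B 4%:R.
Proof.
rewrite (F2E two0 hA a1n Xa1) (F2E two0 hB a2n Xa2) (F2E two0 hAB a3n Xa3)
        (F2E two0 hAbB a4n Xa4).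
have := second (1 - z); rewrite subKr => h.
have e : F1 A (1 - z) * F1 B (1 - z) * (A 4%:R * B 4%:R) = (A 4%:R * F1 A (1 - z)) * (B 4%:R * F1 B (1 - z)) by ring.
rewrite -e h /cexp /cbar /cmul (mcD hB).
have b4 := mc_neq0 hB (four_neq0 two0).
move: (F1 (cmul A B) (1 - z)) (F1 (cmul A (fun x => (B x)^-1)) (1 - z)) (kdelta (1 - z)) => u v k.
rewrite invfM invrK.
move: (B z)^-1 => T.
by field; rewrite ?b4.
Qed.
End Final.


End Helpers.
Import Helpers.

Theorem mainTheorem6 (F : finFieldType) (A B : F -> algC) :
  odd #|F| ->
  is_mchar A -> is_mchar B ->
  (2 < char_order A)%N -> (2 < char_order B)%N ->
  (2 < char_order (cmul A B))%N -> (2 < char_order (cmul A (cbar B)))%N ->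
  forall z : F,
    F21 A (cmul A (@qchar F)) (cexp A 2) z * F21 B (cmul B (@qchar F)) (cexp B 2) z =
      F21 (cmul A B) (cmul (cmul A B) (@qchar F)) (cexp (cmul A B) 2) z
      + cexp (cbar B) 2 (z / 4%:R)
        * F21 (cmul A (cbar B)) (cmul (cmul A (cbar B)) (@qchar F))
              (cexp (cmul A (cbar B)) 2) z
      - kdelta (1 - z) * cmul A B 4%:R
  /\
    F21 A (cmul A (@qchar F)) (@qchar F) z * F21 B (cmul B (@qchar F)) (@qchar F) z =
      F21 (cmul A B) (cmul (cmul A B) (@qchar F)) (@qchar F) z
      + cexp (cbar B) 2 (1 - z)
        * F21 (cmul A (cbar B)) (cmul (cmul A (cbar B)) (@qchar F)) (@qchar F) z
      - kdelta z.
Proof.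
move=> oddF iA iB oA oB oAB oAbB z.
have two0 := two_neq0 oddF.
have hA := mcP iA; have hB := mcP iB.
have [a1 a1n Xa1] := order_gt2 oA.
have [a2 a2n Xa2] := order_gt2 oB.
have [a3 a3n Xa3] := order_gt2 oAB.
have [a4 a4n Xa4] := order_gt2 oAbB.
split.
  exact: (first two0 hA hB a1n a2n a3n a4n Xa1 Xa2 Xa3 Xa4).
exact: (second two0 hA hB a1n a2n a3n a4n Xa1 Xa2 Xa3 Xa4).
Qed.
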